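(* Let $\Psi:[t_0,\infty)\to\mathbb{R}_+$ be a non-decreasing positive function and let $f$ be an essentially sub-linear dimension function. If $\sum_{q} q\,f\!\left(\frac{1}{q^2\Psi(q)}\right)<\infty$, then $\sum_{q}\sum_{1\le p\le q} f\!\left(\frac{1}{pq\Psi(q)}\right)<\infty$, where $q$ ranges over integers $q\ge t_0$ and $p$ over integers.
   Context: A dimension function is an increasing continuous function $f:\mathbb{R}_+\to\mathbb{R}_+$ with $f(r)\to 0$ as $r\to 0$. It is essentially sub-linear if there exists $B>1$ such that $\limsup_{x\to 0}\frac{f(Bx)}{f(x)}<B$. *)

(* Defs.v *)
From Stdlib Require Import Reals.
From Coquelicot Require Import Coquelicot.
Open Scope R_scope.

Definition dimension_function (f : R -> R) : Prop :=
  (forall r, 0 < r -> 0 <= f r) /\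
  (forall r s, 0 < r -> r <= s -> f r <= f s) /\
  (forall r, 0 < r -> continuity_pt f r) /\
  (forall eps, 0 < eps -> exists delta, 0 < delta /\
     forall r, 0 < r < delta -> f r < eps).

(* Essentially sub-linear: exists B > 1 with limsup_{x->0+} f(Bx)/f(x) < B,
   written as: some c < B bounds the ratio f(Bx)/f(x) for all small x > 0
   (in multiplied-out form f(Bx) <= c f(x)). *)
Definition essentially_sublinear (f : R -> R) : Prop :=
  exists B, 1 < B /\ exists c, c < B /\ exists delta, 0 < delta /\
    forall x, 0 < x < delta -> f (B * x) <= c * f x.

(* q ranges over integers q >= t0 (and q >= 1 so that the terms make sense). *)
Definition q_in_range (t0 : R) (q : nat) : bool :=
  Nat.leb 1 q && (if Rle_dec t0 (INR q) then true else false).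

(* Main.v *)
Require Import Defs.
From Stdlib Require Import Reals Lra Lia.
From Coquelicot Require Import Coquelicot.
Open Scope R_scope.

Fixpoint S1 (a : nat -> R) (M : nat) : R :=
  match M with O => 0 | S m => S1 a m + a (S m) end.

Lemma S1_eq a M : sum_n_m a 1 M = S1 a M.
Proof.
induction M.
- rewrite sum_n_m_zero; [reflexivity|lia].
- rewrite sum_n_Sm; [|lia]. simpl. rewrite IHM. reflexivity.
Qed.

Lemma S1_le a b M : (forall p, (1 <= p)%nat -> a p <= b p) -> S1 a M <= S1 b M.
Proof.
intros H; induction M; simpl. lra. pose proof (H (S M) ltac:(lia)). lra.
Qed.

Lemma S1_ext a b M : (forall p, (1 <= p <= M)%nat -> a p = b p) -> S1 a M = S1 b M.
Proof.
intros H; induction M; simpl. lra. rewrite IHM by (intros; apply H; lia).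
rewrite (H (S M)) by lia. reflexivity.
Qed.

Lemma S1_lin u v a b M : S1 (fun p => u * a p + v * b p) M = u * S1 a M + v * S1 b M.
Proof. induction M; simpl. ring. rewrite IHM. ring. Qed.

Lemma S1_nonneg a M : (forall p, (1 <= p)%nat -> 0 <= a p) -> 0 <= S1 a M.
Proof. intros H; induction M; simpl. lra. pose proof (H (S M) ltac:(lia)). lra. Qed.

Definition ind (r : R) (p : nat) : R := if Rle_dec (INR p) r then 1 else 0.

Lemma count r M : 0 <= r -> S1 (ind r) M <= r /\ S1 (ind r) M <= INR M.
Proof.
intros Hr. induction M; cbn [S1]. simpl; lra.
destruct IHM as [H1 H2]. rewrite S_INR.
assert (E: ind r (S M) = if Rle_dec (INR (S M)) r then 1 else 0) by reflexivity.
rewrite E. destruct (Rle_dec (INR (S M)) r) as [h|h]; rewrite ?S_INR in h; lra.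
Qed.

Lemma pow_big B r : 1 < B -> exists k, r < B ^ k.
Proof.
intros HB.
assert (Hb : forall k, 1 + INR k * (B - 1) <= B ^ k).
{ induction k. simpl. lra. rewrite S_INR. cbn [pow].
  assert (0 <= INR k) by apply pos_INR.
  assert (0 <= (B-1)*(B^k - (1 + INR k * (B-1)))) by (apply Rmult_le_pos; lra).
  assert (0 <= INR k * ((B-1)*(B-1))) by (apply Rmult_le_pos; nra). nra. }
destruct (INR_unbounded (r / (B - 1))) as [k Hk]. exists k.
specialize (Hb k). assert (r < INR k * (B-1)).
{ apply Rmult_gt_compat_r with (r := B - 1) in Hk; [|lra].
  unfold Rdiv in Hk. rewrite Rmult_assoc, Rinv_l in Hk; lra. }
lra.
Qed.
Definition term (f : R -> R) (x r : R) (p : nat) : R :=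
  if Rle_dec (INR p) r then f (r / INR p * x) else 0.

Section S.
Variables (f : R -> R) (B c delta x : R).
Hypotheses (HB : 1 < B) (Hc : 1 <= c < B) (Hx : 0 < x < delta)
  (Hf0 : forall r, 0 < r -> 0 <= f r)
  (Hfm : forall r s, 0 < r -> r <= s -> f r <= f s)
  (Hsub : forall y, 0 < y < delta -> f (B * y) <= c * f y).

Lemma termwise r p : 0 < r -> r * x < delta -> (1 <= p)%nat ->
  term f x r p <= c * term f x (r / B) p + c * f x * ind r p.
Proof.
intros Hr Hrx Hp.
assert (HP : 1 <= INR p) by (apply (le_INR 1); lia).
assert (Hfx : 0 <= f x) by (apply Hf0; lra).
unfold term, ind.
assert (HrB : r / B < r).
{ apply Rmult_lt_reg_r with B; [lra|]. unfold Rdiv; rewrite Rmult_assoc, Rinv_l by lra. nra. }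
assert (HrB0 : 0 < r / B) by (apply Rdiv_lt_0_compat; lra).
destruct (Rle_dec (INR p) (r / B)) as [h1|h1].
- destruct (Rle_dec (INR p) r) as [h2|h2]; [|lra].
  replace (r / INR p * x) with (B * (r / B / INR p * x)) by (field; lra).
  assert (0 < r / B / INR p * x).
  { apply Rmult_lt_0_compat; [apply Rdiv_lt_0_compat|]; lra. }
  assert (r / B / INR p * x <= r * x).
  { apply Rmult_le_compat_r; [lra|].
    apply Rle_trans with (r / B); [|lra].
    unfold Rdiv at 1. rewrite <- (Rmult_1_r (r / B)) at 2.
    apply Rmult_le_compat_l; [lra|]. rewrite <- Rinv_1. apply Rinv_le_contravar; lra. }
  pose proof (Hsub (r / B / INR p * x) ltac:(lra)). nra.
- destruct (Rle_dec (INR p) r) as [h2|h2]; [|nra].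
  assert (Hlt : r / INR p < B).
  { apply Rmult_lt_reg_r with (INR p); [lra|]. unfold Rdiv; rewrite Rmult_assoc, Rinv_l by lra.
    apply Rmult_lt_reg_r with (/B). apply Rinv_0_lt_compat; lra.
    replace (B * INR p * / B) with (INR p) by (field; lra). lra. }
  assert (0 < r / INR p * x) by (apply Rmult_lt_0_compat; [apply Rdiv_lt_0_compat|]; lra).
  assert (f (r / INR p * x) <= f (B * x)) by (apply Hfm; nra).
  pose proof (Hsub x Hx). nra.
Qed.

Lemma main_ind M : forall k r, 0 < r < B ^ k -> r * x < delta ->
  S1 (term f x r) M <= (c * B / (B - c)) * r * f x.
Proof.
assert (Hfx : 0 <= f x) by (apply Hf0; lra).
assert (HK : 0 < c * B / (B - c)) by (apply Rdiv_lt_0_compat; nra).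
induction k; intros r Hr Hrx.
- simpl in Hr.
  apply Rle_trans with 0; [| apply Rmult_le_pos; nra].
  apply Rle_trans with (S1 (fun _ => 0) M); [|right; clear; induction M; simpl; lra].
  apply S1_le. intros p Hp. unfold term.
  assert (HP : 1 <= INR p) by (apply (le_INR 1); lia).
  destruct (Rle_dec (INR p) r); lra.
- assert (HrB : r / B < r).
  { apply Rmult_lt_reg_r with B; [lra|]. unfold Rdiv; rewrite Rmult_assoc, Rinv_l by lra. nra. }
  assert (HrB0 : 0 < r / B) by (apply Rdiv_lt_0_compat; lra).
  assert (Hk : r / B < B ^ k).
  { apply Rmult_lt_reg_r with B; [lra|]. unfold Rdiv; rewrite Rmult_assoc, Rinv_l by lra.
    simpl in Hr. lra. }
  assert (IH := IHk (r / B) ltac:(lra) ltac:(nra)).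
  apply Rle_trans with (S1 (fun p => c * term f x (r / B) p + (c * f x) * ind r p) M).
  { apply S1_le. intros p Hp. apply termwise; auto; lra. }
  rewrite S1_lin.
  destruct (count r M) as [C1 _]; [lra|].
  apply Rle_trans with (c * ((c * B / (B - c)) * (r / B) * f x) + c * f x * r).
  { apply Rplus_le_compat. apply Rmult_le_compat_l; lra. apply Rmult_le_compat_l; nra. }
  right. field. lra.
Qed.
End S.

Theorem mainTheorem5 (t0 : R) (Psi f : R -> R)
  (HPsi_pos : forall t, t0 <= t -> 0 < Psi t)
  (HPsi_mono : forall s t, t0 <= s -> s <= t -> Psi s <= Psi t)
  (Hf : dimension_function f)
  (Hsub : essentially_sublinear f)
  (Hconv : ex_series (fun q : nat =>
     if q_in_range t0 q then
       INR q * f (1 / (INR q ^ 2 * Psi (INR q)))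
     else 0)) :
  ex_series (fun q : nat =>
     if q_in_range t0 q then
       sum_n_m (fun p : nat => f (1 / (INR p * INR q * Psi (INR q)))) 1 q
     else 0).
Proof.
destruct Hf as [Hf0 [Hfm _]].
destruct Hsub as [B [HB [c [Hc [delta [Hd Hs]]]]]].
set (c' := Rmax c 1).
assert (Hc1 : 1 <= c') by apply Rmax_r.
assert (Hcc : c <= c') by apply Rmax_l.
assert (HcB : c' < B) by (unfold c'; apply Rmax_lub_lt; lra).
assert (Hs' : forall y, 0 < y < delta -> f (B * y) <= c' * f y).
{ intros y Hy. pose proof (Hs y Hy). pose proof (Hf0 y ltac:(lra)). nra. }
destruct (INR_unbounded t0) as [n Hn].
set (n0 := S n).
assert (Hn0 : t0 <= INR n0) by (unfold n0; rewrite S_INR; lra).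
assert (HP0 : 0 < Psi (INR n0)) by (apply HPsi_pos; lra).
destruct (INR_unbounded (1 / (delta * Psi (INR n0)))) as [n1 Hn1].
set (N := (n0 + n1)%nat).
set (K := c' * B / (B - c')).
apply (ex_series_incr_n _ N).
apply (@ex_series_le R_AbsRing R_CompleteNormedModule) with (b := fun k => K * (if q_in_range t0 (N + k) then
       INR (N + k) * f (1 / (INR (N + k) ^ 2 * Psi (INR (N + k)))) else 0)).
2:{ apply (ex_series_scal K) in Hconv.
    apply (ex_series_incr_n _ N) in Hconv. exact Hconv. }
intros k. set (q := (N + k)%nat).
assert (Hq1 : (1 <= q)%nat) by (unfold q, N, n0; lia).
assert (HqN : INR n0 <= INR q) by (apply le_INR; unfold q, N; lia).
assert (Hqn1 : INR n1 <= INR q) by (apply le_INR; unfold q, N; lia).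
assert (Hq1R : 1 <= INR q) by (apply (le_INR 1); lia).
assert (Hqt : t0 <= INR q) by lra.
assert (Hr : q_in_range t0 q = true).
{ unfold q_in_range. rewrite (proj2 (Nat.leb_le 1 q) Hq1).
  destruct (Rle_dec t0 (INR q)); [reflexivity|contradiction]. }
rewrite Hr.
set (Pq := Psi (INR q)).
assert (HPq : Psi (INR n0) <= Pq) by (apply HPsi_mono; lra).
set (x := 1 / (INR q ^ 2 * Pq)).
assert (Hx0 : 0 < x).
{ unfold x. apply Rdiv_lt_0_compat; [lra|]. apply Rmult_lt_0_compat; [apply pow_lt|]; lra. }
assert (Hqx : INR q * x = 1 / (INR q * Pq)) by (unfold x; field; split; lra).
assert (Hqxd : INR q * x < delta).
{ rewrite Hqx. apply Rmult_lt_reg_r with (INR q * Pq). nra.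
  unfold Rdiv. rewrite Rmult_1_l, Rinv_l by nra.
  assert (1 / (delta * Psi (INR n0)) < INR q) by lra.
  apply Rmult_lt_compat_r with (r := delta * Psi (INR n0)) in H; [|nra].
  unfold Rdiv in H. rewrite Rmult_1_l, Rinv_l in H by nra.
  apply Rlt_le_trans with (INR q * (delta * Psi (INR n0))); [lra|].
  assert (0 <= INR q * delta) by nra. nra. }
assert (Hxd : 0 < x < delta) by nra.
rewrite S1_eq.
assert (Heq : S1 (fun p : nat => f (1 / (INR p * INR q * Pq))) q = S1 (term f x (INR q)) q).
{ apply S1_ext. intros p Hp. unfold term.
  assert (Hpq : INR p <= INR q) by (apply le_INR; lia).
  assert (HP : 1 <= INR p) by (apply (le_INR 1); lia).
  destruct (Rle_dec (INR p) (INR q)); [|contradiction].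
  f_equal. unfold x. field. split; lra. }
fold Pq. rewrite Heq.
assert (Hnn : 0 <= S1 (term f x (INR q)) q).
{ apply S1_nonneg. intros p Hp. unfold term.
  assert (HP : 1 <= INR p) by (apply (le_INR 1); lia).
  destruct (Rle_dec (INR p) (INR q)); [|lra]. apply Hf0.
  apply Rmult_lt_0_compat; [apply Rdiv_lt_0_compat|]; lra. }
change (norm (S1 (term f x (INR q)) q)) with (Rabs (S1 (term f x (INR q)) q)).
rewrite Rabs_pos_eq by exact Hnn.
destruct (pow_big B (INR q) HB) as [kk Hkk].
pose proof (main_ind f B c' delta x HB ltac:(lra) Hxd Hf0 Hfm Hs' q kk (INR q) ltac:(lra) Hqxd) as Hm.
fold K in Hm. fold x. rewrite <- Rmult_assoc. exact Hm.
Qed.
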